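(* Let $N=\{1,\dots,n\}$ with $n\ge2$, let $A=\{a_1,\dots,a_k\}$ be finite and $u_1,\dots,u_n:A\to\mathbb{R}$ arbitrary. In the $P^{n-1}\&C$ game defined in the context, (i) every subgame-perfect Nash equilibrium has an outcome $a$ that is efficient, i.e. $\sum_{i=1}^n u_i(a)=\max_{b\in A}\sum_{i=1}^n u_i(b)$, and (ii) every efficient option is the outcome of some subgame-perfect Nash equilibrium.
   Context: Players have quasi-linear utilities $u_i(a)+t_i$. Let $P=\{p\in\mathbb{R}^k:\sum_j p_j=0\}$. The $P^{n-1}\&C$ game: player 1 chooses $p^2\in P$; then for $i=2,\dots,n-1$ in order, player $i$, having observed $p^2,\dots,p^i$, chooses $p^{i+1}\in P$; finally player $n$, having observed $p^2,\dots,p^n$, chooses an option $a\in A$ (the outcome). Then player $n$ pays $p^n(a)$ to player $n-1$, and each player $m\in\{2,\dots,n-1\}$ pays $p^m(a)$ to player $m-1$ while receiving $p^{m+1}(a)$ from player $m+1$. Payoffs: $g_1=u_1(a)+p^2(a)$; $g_m=u_m(a)-p^m(a)+p^{m+1}(a)$ for $2\le m\le n-1$; $g_n=u_n(a)-p^n(a)$. A pure strategy for player $i<n$ maps each history $(p^2,\dots,p^i)$ to an element of $P$; for player $n$ it maps each $(p^2,\dots,p^n)$ to an element of $A$. A subgame-perfect Nash equilibrium is a strategy profile whose restriction to every subgame is a Nash equilibrium of that subgame; its outcome is the option chosen on the path of play. *)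

(* Defs.v *)
From HB Require Import structures.
From mathcomp Require Import all_boot all_order all_algebra.
From mathcomp Require Import reals.
Set Implicit Arguments. Unset Strict Implicit. Unset Printing Implicit Defensive.
Import Order.TTheory GRing.Theory Num.Theory.
Local Open Scope ring_scope.

(* Conventions: players are 'I_n, 0-based: player i : 'I_n is player i+1 of
   the paper.  A history is a sequence of price vectors ps = [p^2; ...; p^j],
   i.e. ps`_k = p^(k+2).  Price-setting player j (0-based, j < n-1, i.e. the
   paper's player j+1) moves at histories of size j and chooses p^(j+2).
   A profile consists of  sigma : nat -> seq (A -> R) -> (A -> R)
   (sigma j = strategy of the price-setter j) and  tau : seq (A -> R) -> A
   (strategy of the last player n). *)

Section Game.
Variables (R : realType) (A : finType).

Definition inP (p : A -> R) : Prop := \sum_(x : A) p x = 0.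

Definition hist := seq (A -> R).

Definition zerop : A -> R := fun _ => 0.

Definition valid_hist (h : hist) : Prop :=
  forall k, (k < size h)%N -> inP (nth zerop h k).

(* payoff of player i (0-based) given the full price history ps and outcome a:
   g_i = u_i(a) - p^(i+1)(a) [if i > 0] + p^(i+2)(a) [if i < n-1]. *)
Definition payoff (n : nat) (u : 'I_n -> A -> R) (ps : hist) (a : A)
    (i : 'I_n) : R :=
  u i a - (if (0 < (i : nat))%N then nth zerop ps (i.-1) a else 0)
        + (if (i.+1 < n)%N then nth zerop ps i a else 0).

Fixpoint extend (sigma : nat -> hist -> (A -> R)) (k : nat) (h : hist) : hist :=
  match k with
  | 0 => h
  | k'.+1 => extend sigma k' (rcons h (sigma (size h) h))
  end.

Definition complete (n : nat) (sigma : nat -> hist -> (A -> R)) (h : hist) : hist :=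
  extend sigma (n.-1 - size h) h.

Definition outcome_from (n : nat) sigma (tau : hist -> A) (h : hist) : A :=
  tau (complete n sigma h).

Definition payoff_from (n : nat) (u : 'I_n -> A -> R) sigma tau (h : hist)
    (i : 'I_n) : R :=
  payoff u (complete n sigma h) (outcome_from n sigma tau h) i.

Definition valid_price_strategy (j : nat) (s : hist -> (A -> R)) : Prop :=
  forall h, size h = j -> valid_hist h -> inP (s h).

Definition valid_profile (n : nat) (sigma : nat -> hist -> (A -> R)) : Prop :=
  forall j, (j < n.-1)%N -> valid_price_strategy j (sigma j).

Definition upd (sigma : nat -> hist -> (A -> R)) (j : nat) (s : hist -> (A -> R)) :=
  fun j' => if j' == j then s else sigma j'.

Definition subgame_nash (n : nat) (u : 'I_n -> A -> R) sigma tau (h : hist) : Prop :=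
  (forall (i : 'I_n), (i.+1 < n)%N -> forall s, valid_price_strategy i s ->
     payoff_from u (upd sigma i s) tau h i <= payoff_from u sigma tau h i)
  /\
  (forall (i : 'I_n), (i : nat) = n.-1 -> forall t : hist -> A,
     payoff_from u sigma t h i <= payoff_from u sigma tau h i).

Definition SPNE (n : nat) (u : 'I_n -> A -> R) sigma tau : Prop :=
  valid_profile n sigma /\
  forall h : hist, valid_hist h -> (size h <= n.-1)%N -> subgame_nash u sigma tau h.

Definition outcome (n : nat) sigma tau : A := outcome_from n sigma tau [::].

Definition efficient (n : nat) (u : 'I_n -> A -> R) (a : A) : Prop :=
  forall b : A, \sum_(i < n) u i b <= \sum_(i < n) u i a.

End Game.

(* Main.v *)
Require Import Defs.
From mathcomp Require Import all_boot all_order all_algebra.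
From mathcomp Require Import reals.
From mathcomp Require Import ring lra zify.
Import Order.TTheory GRing.Theory Num.Theory.
Local Open Scope ring_scope.

Section Proofs.
Variables (R : realType) (A : finType) (n : nat) (u : 'I_n -> A -> R).

Lemma size_extend (f : nat -> hist R A -> (A -> R)) k h :
  size (extend f k h) = (size h + k)%N.
Proof.
elim: k h => [|k IH] h /=; first by rewrite addn0.
by rewrite IH size_rcons addSnnS.
Qed.

Lemma nth_extend_prefix (f : nat -> hist R A -> (A -> R)) k h m :
  (m < size h)%N -> nth (@zerop R A) (extend f k h) m = nth (@zerop R A) h m.
Proof.
elim: k h => [|k IH] h //= Hm.
rewrite IH ?size_rcons; last by apply: ltnW.
by rewrite nth_rcons Hm.
Qed.

Lemma extend_eq (f g : nat -> hist R A -> (A -> R)) k h :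
  (forall m, (size h <= m)%N -> f m = g m) -> extend f k h = extend g k h.
Proof.
elim: k h => [|k IH] h E //=.
rewrite (E (size h)) //; apply: IH => m; rewrite size_rcons => Hm.
by apply: E; apply: ltnW.
Qed.

Lemma complete_step (f : nat -> hist R A -> (A -> R)) h :
  (size h < n.-1)%N -> complete n f h = complete n f (rcons h (f (size h) h)).
Proof.
move=> Hs; rewrite /complete size_rcons.
have -> : (n.-1 - size h = (n.-1 - (size h).+1).+1)%N by lia.
by [].
Qed.

Lemma valid_rcons (h : hist R A) p : valid_hist h -> inP p -> valid_hist (rcons h p).
Proof.
move=> Vh Pp k; rewrite size_rcons ltnS leq_eqVlt nth_rcons => /orP [/eqP ->|Hk].
  by rewrite ltnn eqxx.
by rewrite Hk; apply: Vh.
Qed.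

Definition S (j : nat) (b : A) : R := \sum_(i < n | (j <= i)%N) u i b.

Definition Vf (j : nat) (h : hist R A) (b : A) : R :=
  S j b - (if (0 < j)%N then nth (@zerop R A) h j.-1 b else 0).

Lemma S_rec (i : 'I_n) b : S i b = u i b + S i.+1 b.
Proof.
rewrite /S (bigD1 i) //=; congr (_ + _); apply: eq_bigl => k.
rewrite -(inj_eq val_inj) /= andbC eq_sym -ltn_neqAle.
by [].
Qed.

Lemma S_n b : S n b = 0.
Proof. by rewrite /S big_pred0 // => k; rewrite leqNgt ltn_ord. Qed.

Lemma S_0 b : S 0 b = \sum_(i < n) u i b.
Proof. by rewrite /S; apply: eq_bigl => k. Qed.

Lemma payoff_mid (ps : hist R A) o (i : 'I_n) : (i.+1 < n)%N ->
  payoff u ps o i = Vf i ps o - S i.+1 o + nth (@zerop R A) ps i o.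
Proof.
move=> Hi; rewrite /payoff /Vf S_rec Hi.
case: (0 < (i:nat))%N; lra.
Qed.

Lemma payoff_last (ps : hist R A) o (i : 'I_n) : (i : nat) = n.-1 ->
  payoff u ps o i = Vf i ps o.
Proof.
move=> Hi; rewrite /payoff /Vf S_rec.
have Hlt := ltn_ord i.
have -> : (i.+1 < n)%N = false by lia.
have -> : i.+1 = n by lia.
rewrite S_n; case: (0 < (i:nat))%N; lra.
Qed.

Lemma Vf_prefix j (ps h : hist R A) b :
  (forall k, (k < size h)%N -> nth (@zerop R A) ps k = nth (@zerop R A) h k) ->
  (j <= size h)%N -> Vf j ps b = Vf j h b.
Proof.
move=> E Hj; rewrite /Vf; case: j Hj => [|j] Hj //=.
by rewrite E.
Qed.

Definition kA : R := #|A|%:R.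

Lemma kA_gt0 (a : A) : 0 < kA.
Proof. rewrite /kA ltr0n; apply/card_gt0P; by exists a. Qed.

Lemma avg_le j (p : A -> R) o : inP p ->
  (forall x, S j x - p x <= S j o - p o) ->
  (\sum_y S j y) / kA <= S j o - p o.
Proof.
move=> Pp Ho; rewrite ler_pdivrMr ?(kA_gt0 o) //.
have : \sum_y (S j y - p y) <= \sum_(y : A) (S j o - p o) by apply: ler_sum => y _.
rewrite sumrB Pp subr0 sumr_const /kA => H.
by rewrite -mulr_natr in H.
Qed.


Lemma nth_complete_rcons (f : nat -> hist R A -> (A -> R)) (h : hist R A) p k :
  (k <= size h)%N ->
  nth (@zerop R A) (complete n f (rcons h p)) k = if k == size h then p else nth (@zerop R A) h k.
Proof.
move=> Hk; rewrite /complete nth_extend_prefix ?size_rcons ?ltnS // nth_rcons.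
case: (ltngtP k (size h)) => H.
- by [].
- by move: Hk; rewrite leqNgt H.
- by [].
Qed.

Lemma Vrc (h : hist R A) p y : Vf (size h).+1 (rcons h p) y = S (size h).+1 y - p y.
Proof. by rewrite /Vf /= nth_rcons ltnn eqxx. Qed.

Lemma complete_upd (f : nat -> hist R A -> (A -> R)) (i : nat) s (h : hist R A) :
  size h = i -> (i < n.-1)%N ->
  complete n (upd f i s) h = complete n f (rcons h (s h)).
Proof.
move=> Hs Hi; rewrite complete_step ?Hs //.
have -> : upd f i s i h = s h by rewrite /upd eqxx.
rewrite /complete; apply: extend_eq => m; rewrite size_rcons Hs => Hm.
by rewrite /upd ifN //; apply/eqP; lia.
Qed.

Lemma part1 (f : nat -> hist R A -> (A -> R)) (tau : hist R A -> A) :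
  (2 <= n)%N -> SPNE u f tau -> forall k (h : hist R A), valid_hist h ->
  (size h + k)%N = n.-1 ->
  forall x, Vf (size h) h x <= Vf (size h) h (outcome_from n f tau h).
Proof.
move=> hn [Vp Nash]; elim=> [|k IH] h Vh Hs x.
  have Hlt : (n.-1 < n)%N by lia.
  have [_ N2] := Nash h Vh (ltac:(lia)).
  have := N2 (Ordinal Hlt) erefl (fun _ => x).
  rewrite /payoff_from /outcome_from !payoff_last //.
  have -> : complete n f h = h.
    by rewrite /complete; have -> : (n.-1 - size h = 0)%N by lia.
  have -> : nat_of_ord (Ordinal Hlt) = size h by rewrite /=; lia.
  by [].
have Hj : (size h < n.-1)%N by lia.
set ps := f (size h) h.
have Pps : inP ps := Vp (size h) Hj h erefl Vh.
have IH1 := IH (rcons h ps) (valid_rcons _ _ Vh Pps) ltac:(rewrite size_rcons; lia).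
rewrite size_rcons in IH1.
have -> : outcome_from n f tau h = outcome_from n f tau (rcons h ps)
  by rewrite /outcome_from complete_step.
move: IH1; set a1 := outcome_from n f tau (rcons h ps) => IH1.
rewrite leNgt; apply/negP => Hlt.
set eps := Vf (size h) h x - Vf (size h) h a1.
have eps_gt0 : 0 < eps by rewrite /eps subr_gt0.
have kA0 := kA_gt0 x.
set av := (\sum_y S (size h).+1 y) / kA.
set d := eps / kA - av.
set p' := fun y => S (size h).+1 y + d - (if y == x then eps else 0).
have Pp' : inP p'.
  have Hs1 : \sum_(y : A) (if y == x then eps else 0) = eps.
    by rewrite (bigD1 x) //= eqxx big1 ?addr0 // => y /negbTE ->.
  rewrite /inP /p' sumrB big_split /= sumr_const Hs1 -mulr_natr.
  change (#|A|%:R) with kA.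
  rewrite /d /av mulrBl !divfK ?gt_eqF //; lra.
have IH2 := IH (rcons h p') (valid_rcons _ _ Vh Pp') ltac:(rewrite size_rcons; lia).
rewrite size_rcons in IH2.
move: IH2; set a2 := outcome_from n f tau (rcons h p') => IH2.
have Ea2 : a2 = x.
  case: (eqVneq a2 x) => // Hne.
  have := IH2 x; rewrite !Vrc /p' eqxx (negbTE Hne) => H; exfalso; clear Hs Hj hn; lra.
have [N1 _] := Nash h Vh (ltac:(lia)).
have Hlt' : (size h < n)%N by lia.
have := N1 (Ordinal Hlt') ltac:(rewrite /=; lia) (fun _ => p') (fun _ _ _ => Pp').
rewrite /payoff_from /outcome_from /=.
rewrite complete_upd // [complete n f h]complete_step //.
have Hn1 : ((size h).+1 < n)%N by lia.
rewrite !payoff_mid //=.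
rewrite !nth_complete_rcons // eqxx.
rewrite !(@Vf_prefix (size h) _ h) //; last first.
  by move=> k0 Hk0; rewrite nth_complete_rcons ?(ltnW Hk0) // (ltn_eqF Hk0).
  by move=> k0 Hk0; rewrite nth_complete_rcons ?(ltnW Hk0) // (ltn_eqF Hk0).
change (tau (complete n f (rcons h p'))) with a2.
change (tau (complete n f (rcons h (f (size h) h)))) with a1.
rewrite Ea2.
have Hav : av <= S (size h).+1 a1 - ps a1.
  by apply: avg_le => // y; rewrite -!Vrc.
have : 0 < eps / kA by apply: divr_gt0.
rewrite /p' eqxx /d /eps.
rewrite -/ps; clear Hs Hj hn Hn1 Hlt'; lra.
Qed.

Lemma size_complete (f : nat -> hist R A -> (A -> R)) (h : hist R A) :
  (size h <= n.-1)%N -> size (complete n f h) = n.-1.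
Proof. by move=> H; rewrite /complete size_extend; lia. Qed.

Variable a : A.

Definition c (k : nat) (x : A) : R := S k x - (\sum_y S k y) / kA.
Definition sig : nat -> hist R A -> (A -> R) := fun j _ => c j.+1.
Definition amax (g : A -> R) : A := [arg max_(x > a) g x]%O.
Fixpoint pick (ps : hist R A) (k : nat) : A :=
  if k is k'.+1 then
    (if [forall x, nth (@zerop R A) ps k' x == c k x] then pick ps k'
     else amax (fun b => S k b - nth (@zerop R A) ps k' b))
  else a.
Definition tau0 (ps : hist R A) : A := pick ps (size ps).

Lemma amaxP g x : g x <= g (amax g).
Proof. by rewrite /amax; case: arg_maxP => //= i _ Hi; apply: Hi. Qed.

Lemma c_inP k : inP (c k).
Proof.
rewrite /inP /c sumrB sumr_const -mulr_natr.
change (#|A|%:R) with kA.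
by rewrite divfK ?subrr // gt_eqF // (kA_gt0 a).
Qed.

Lemma nth_extend_c k (h : hist R A) m : (size h <= m < size h + k)%N ->
  nth (@zerop R A) (extend sig k h) m = c m.+1.
Proof.
elim: k h => [|k IH] h Hm; first by lia.
rewrite /=; case: (eqVneq m (size h)) => [->|Hne].
  by rewrite nth_extend_prefix ?size_rcons // nth_rcons ltnn eqxx.
by apply: IH; rewrite size_rcons; lia.
Qed.

Lemma pick_ext (ps ps' : hist R A) k :
  (forall m, (m < k)%N -> nth (@zerop R A) ps m = nth (@zerop R A) ps' m) ->
  pick ps k = pick ps' k.
Proof.
elim: k => [|k IH] E //=.
rewrite E // IH // => m Hm; apply: E; lia.
Qed.

Lemma pick_skip (ps : hist R A) j k :
  (forall m, (j <= m < k)%N -> nth (@zerop R A) ps m = c m.+1) ->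
  (j <= k)%N -> pick ps k = pick ps j.
Proof.
elim: k => [|k IH] E Hj; first by have -> : j = 0%N by lia.
case: (eqVneq j k.+1) => [-> //|Hne].
rewrite /=.
have -> : [forall x, nth (@zerop R A) ps k x == c k.+1 x] = true.
  by apply/forallP => x; rewrite E ?eqxx //; lia.
apply: IH; last by lia.
move=> m Hm; apply: E; lia.
Qed.

Lemma claimC (effa : efficient u a) (ps : hist R A) i x :
  Vf i ps x <= Vf i ps (pick ps i).
Proof.
case: i => [|m].
  by rewrite /Vf /= !subr0 !S_0; apply: effa.
rewrite /Vf /=; case: ifP => [/forallP H|_].
  rewrite !(eqP (H _)) /c; lra.
by apply: (amaxP (fun b => S m.+1 b - nth (@zerop R A) ps m b)).
Qed.

Lemma tau0_complete (g : hist R A) : (size g <= n.-1)%N ->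
  tau0 (complete n sig g) = pick g (size g).
Proof.
move=> Hg; rewrite /tau0 size_complete //.
rewrite (@pick_skip _ (size g)) //.
  apply: (@pick_ext _ _ (size g)) => m Hm; rewrite /complete nth_extend_prefix //.
move=> m Hm; rewrite /complete nth_extend_c //; lia.
Qed.

Lemma dev (effa : efficient u a) (h : hist R A) (p : A -> R) (i : 'I_n) :
  size h = i -> (i.+1 < n)%N -> inP p ->
  payoff u (complete n sig (rcons h p)) (tau0 (complete n sig (rcons h p))) i <=
  payoff u (complete n sig (rcons h (c i.+1))) (tau0 (complete n sig (rcons h (c i.+1)))) i.
Proof.
move=> Hs Hi Pp.
have gen : forall q, payoff u (complete n sig (rcons h q)) (tau0 (complete n sig (rcons h q))) i
   = Vf i h (pick (rcons h q) i.+1) - S i.+1 (pick (rcons h q) i.+1) + q (pick (rcons h q) i.+1).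
  move=> q; rewrite tau0_complete ?size_rcons; last by lia.
  rewrite Hs payoff_mid // nth_complete_rcons ?Hs // eqxx.
  rewrite (@Vf_prefix i _ h) ?Hs //.
  by move=> k0 Hk0; rewrite nth_complete_rcons ?Hs ?(ltnW Hk0) // (ltn_eqF Hk0).
have pe : forall q, pick (rcons h q) i = pick h i.
  by move=> q; apply: pick_ext => m Hm; rewrite nth_rcons Hs Hm.
have nq : forall q, nth (@zerop R A) (rcons h q) i = q by move=> q; rewrite nth_rcons Hs ltnn eqxx.
rewrite !gen /= !nq.
have -> : [forall x, c i.+1 x == c i.+1 x] = true by apply/forallP => x.
rewrite pe.
have HC := claimC effa h i.
case: ifP => [/forallP H|_].
  rewrite pe (eqP (H _)) /c; lra.
set o := amax _.
have Hav : (\sum_y S i.+1 y) / kA <= S i.+1 o - p o.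
  by apply: avg_le => // y; apply: (amaxP (fun b => S i.+1 b - p b)).
have := HC o; rewrite !pe /c; clear Hs Hi; lra.
Qed.

Lemma push (effa : efficient u a) (i : 'I_n) s : (i.+1 < n)%N -> valid_price_strategy i s ->
  forall k (h : hist R A), valid_hist h -> (size h + k)%N = i ->
  payoff_from u (upd sig i s) tau0 h i <= payoff_from u sig tau0 h i.
Proof.
move=> Hi Vs; elim=> [|k IH] h Vh Hs.
  rewrite addn0 in Hs.
  rewrite /payoff_from /outcome_from complete_upd //; last by lia.
  rewrite [complete n sig h]complete_step; last by lia.
  rewrite /sig Hs; apply: dev => //; exact: Vs.
have Hlt : (size h < n.-1)%N by lia.
rewrite /payoff_from /outcome_from complete_step // [complete n sig h]complete_step //.
have -> : upd sig i s (size h) h = c (size h).+1 by rewrite /upd ifN //; apply/eqP; lia.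
have := IH (rcons h (c (size h).+1)) (valid_rcons _ _ Vh (c_inP _)) ltac:(rewrite size_rcons; lia).
by rewrite /payoff_from /outcome_from.
Qed.

Lemma part2 (effa : efficient u a) : (2 <= n)%N -> SPNE u sig tau0 /\ outcome n sig tau0 = a.
Proof.
move=> hn; split; last first.
  rewrite /outcome /outcome_from tau0_complete //.
split; first by move=> j _ h _ _; apply: c_inP.
move=> h Vh Hh; split.
  move=> i Hi s Vs.
  case: (ltnP i (size h)) => Hih.
    rewrite /payoff_from /outcome_from /complete (@extend_eq _ sig) //.
    by move=> m Hm; rewrite /upd ifN //; apply/eqP; lia.
  apply: (@push effa i s Hi Vs (i - size h)%N h Vh); lia.
move=> i Hi t.
rewrite /payoff_from /outcome_from !payoff_last //.
rewrite /tau0 size_complete // -Hi.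
exact: claimC.
Qed.

End Proofs.

Theorem proposition2 (R : realType) (A : finType) (n : nat)
    (u : 'I_n -> A -> R) (hn : (2 <= n)%N) :
  (forall (sigma : nat -> hist R A -> (A -> R)) (tau : hist R A -> A),
     SPNE u sigma tau -> efficient u (outcome n sigma tau))
  /\
  (forall a : A, efficient u a ->
     exists (sigma : nat -> hist R A -> (A -> R)) (tau : hist R A -> A),
       SPNE u sigma tau /\ outcome n sigma tau = a).
Proof.
split.
  move=> sigma tau H x.
  have V0 : valid_hist (R:=R) (A:=A) [::] by move=> k.
  have := @part1 R A n u sigma tau hn H n.-1 [::] V0 erefl x.
  by rewrite /Vf /= !subr0 !S_0.
move=> a Ea; exists (@sig R A n u), (@tau0 R A n u a); exact: part2.
Qed.
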